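(* Let $n\geq 10$ and $t\geq 3\log_2 n$ be positive integers. Then there exists an orientation $D$ of the complete bipartite graph $K_{n,n}$, with parts $X$ and $Y$, such that for every $I\subseteq X$ and $J\subseteq Y$ with $|I|=|J|=t$, the induced subdigraph $D[I\cup J]$ contains a directed cycle.
   Context: An orientation of a graph is the digraph obtained by giving each edge one of its two directions. *)

(* Defs.v *)
From Stdlib Require Import Reals.
From mathcomp Require Import all_boot.
Set Implicit Arguments. Unset Strict Implicit. Unset Printing Implicit Defensive.

Definition bvertex (n : nat) : finType := ('I_n + 'I_n)%type.

(* An orientation of K_{n,n}: for each edge {x,y} (x in X, y in Y), the boolean
   o x y says whether the edge is directed x -> y (true) or y -> x (false). *)
Definition orientation (n : nat) := {ffun 'I_n -> {ffun 'I_n -> bool}}.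

Definition arc (n : nat) (o : orientation n) : rel (bvertex n) :=
  fun u v => match u, v with
             | inl x, inr y => o x y
             | inr y, inl x => ~~ o x y
             | _, _ => false
             end.

Definition has_dicycle (n : nat) (o : orientation n) (S : {set bvertex n}) : Prop :=
  exists c : seq (bvertex n),
    [/\ c != [::], uniq c, all (fun v => v \in S) c & cycle (arc o) c].

Local Open Scope R_scope.
Definition log2R (x : R) : R := ln x / ln 2.
Definition t_bound (n t : nat) : Prop := 3 * log2R (INR n) <= INR t.

(* Main.v *)
Require Import Defs.
From Stdlib Require Import Reals Lra.
From mathcomp Require Import all_boot zify.

Lemma expn_pow a b : (a ^ b)%N = Nat.pow a b.
Proof. elim: b => [|b IH]; first by []. by rewrite expnS IH /= mulnE. Qed.

Section L.
Local Open Scope R_scope.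
Lemma log_bound (n t : nat) : (1 <= n)%N ->
  3 * (ln (INR n) / ln 2) <= INR t -> (n ^ 3 <= 2 ^ t)%N.
Proof.
move=> n1 H.
have l2 : 0 < ln 2 by rewrite -ln_1; apply: ln_increasing; lra.
have npos : 0 < INR n by apply: lt_0_INR; apply/leP.
rewrite leqNgt; apply/negP => /ltP/lt_INR.
rewrite !expn_pow !pow_INR => Hlt.
have two : INR 2 = 2 by simpl; lra.
rewrite two in Hlt.
have := ln_increasing _ _ (pow_lt 2 t ltac:(lra)) Hlt.
rewrite !ln_pow; [|lra|lra].
move=> H2.
have H3 : 3 * ln (INR n) <= INR t * ln 2.
  have := Rmult_le_compat_r (ln 2) _ _ (Rlt_le _ _ l2) H.
  rewrite Rmult_assoc /Rdiv Rmult_assoc Rinv_l; lra.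
simpl in H2. lra.
Qed.
End L.

Lemma K6 u : 11 <= u -> (u.+1)^6 <= 2 * u^6.
Proof.
move=> hu.
have h1 : (11 * u.+1)^6 <= (12 * u)^6.
  rewrite leq_exp2r; last by []. lia.
rewrite !expnMn in h1.
move: h1; generalize (u^6) ((u.+1)^6) => a b h1. lia.
Qed.

Lemma Wineq t : 10 <= t -> (t.+1)^(6*t) < (t`!)^6 * 2^(t*t).
Proof.
elim: t => // t IH Ht.
have [E|ne] := eqVneq t 9.
  subst t. rewrite !factS fact0. lia.
have {}IH := IH ltac:(lia).
have k := K6 (t.+1) ltac:(lia).
have s1 : (t.+2)^(6 * t.+1) <= 2^(t.+1) * (t.+1)^6 * (t.+1)^(6*t).
  rewrite -mulnA -expnD -mulnS.
  rewrite !expnM -expnMn leq_exp2r //.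
apply: (leq_ltn_trans s1).
have -> : (t.+1)`! ^ 6 * 2 ^ (t.+1 * t.+1) = (2^(t.+1) * (t.+1)^6) * (2^t * (t`!^6 * 2^(t*t))).
  rewrite factS expnMn.
  have -> : t.+1 * t.+1 = t.+1 + t + t * t by lia.
  rewrite !expnD. 
  move: (2^t.+1) (2^t) (t.+1 ^6) (t`! ^ 6) (2^(t*t)) => a b c d e. lia.
rewrite ltn_pmul2l ?muln_gt0 ?expn_gt0 //.
apply: (leq_trans IH). by rewrite leq_pmull // expn_gt0.
Qed.

Lemma ffact_le_exp n t : n ^_ t <= n ^ t.
Proof.
elim: t => // t IH. rewrite ffactnSr expnSr leq_mul // leq_subr //.
Qed.

Lemma core_ineq n t : 10 <= t -> n^3 <= 2^t ->
  (n ^ t * (t.+1)^t)^2 < (t`! ^ 2 * 2^(t*t)).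
Proof.
move=> ht hn.
rewrite -(@ltn_exp2r _ _ 3) //.
have e1 : ((n ^ t * t.+1 ^ t) ^ 2) ^ 3 = (n^3)^(2*t) * (t.+1)^(6*t).
  rewrite -!expnM expnMn -!expnM. have -> : 6 * t = t * (2 * 3) by lia. rewrite (_ : 3 * (2 * t) = t * (2 * 3)); [by [] | lia].
have e2 : (t`! ^ 2 * 2 ^ (t * t)) ^ 3 = 2^(2*(t*t)) * (t`!^6 * 2^(t*t)).
  rewrite expnMn -!expnM.
  have -> : t * t * 3 = 2 * (t * t) + t * t by lia.
  rewrite expnD. have -> : 2 * 3 = 6 by [].
  move: (2 ^ (2 * (t * t))) (2 ^ (t * t)) (t`! ^ 6) => a b c; lia.
rewrite e1 e2.
apply: (@leq_ltn_trans ((2^t)^(2*t) * t.+1 ^ (6 * t))).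
  by rewrite leq_mul2r leq_exp2r ?hn ?orbT //; lia.
rewrite -expnM. have -> : t * (2 * t) = 2 * (t * t) by lia.
by rewrite ltn_mul2l expn_gt0 /= Wineq.
Qed.

Lemma final_ineq n t : 10 <= n -> n^3 <= 2^t ->
  'C(n,t)^2 * ((t.+1)^t)^2 * 2^(n*n - t*t) < 2^(n*n).
Proof.
move=> hn h3.
have ht : 10 <= t.
  rewrite leqNgt; apply/negP => lt.
  have a : 2^t <= 2^9 by rewrite leq_exp2l //; lia.
  have b : 10^3 <= n^3 by rewrite leq_exp2r.
  move: a b h3; generalize (2^t) (n^3) => x y; lia.
have [tn|nt] := leqP t n; last first.
  by rewrite bin_small // !exp0n // !mul0n expn_gt0.
have tt : t * t <= n * n by rewrite leq_mul.
rewrite -{2}(subnK tt) expnD mulnC ltn_pmul2l ?expn_gt0 //.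
rewrite -(@ltn_pmul2l (t`! ^ 2)) ?expn_gt0 ?fact_gt0 //.
rewrite mulnA -expnMn [t`! * _]mulnC bin_ffact -expnMn.
apply: (leq_ltn_trans _ (@core_ineq n t ht h3)).
rewrite leq_exp2r // leq_mul2r ffact_le_exp orbT //.
Qed.
Set Implicit Arguments. Unset Strict Implicit. Unset Printing Implicit Defensive.

Section Comb.
Variable n : nat.
Notation V := ('I_n * 'I_n)%type.
Notation F := {ffun V -> bool}.

Definition pat (f : F) x x' y y' := [&& f (x,y), ~~ f (x',y), f (x',y') & ~~ f (x,y')].
Definition goodb (f : F) (I J : {set 'I_n}) :=
  [exists x, exists x', exists y, exists y',
     [&& x \in I, x' \in I, y \in J, y' \in J & pat f x x' y y']].

Definition Row (f : F) (J : {set 'I_n}) x := [set y in J | f (x,y)].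
Definition alpha (f : F) (I J : {set 'I_n}) x := #|[set x' in I | Row f J x' \proper Row f J x]|.
Definition beta (f : F) (I : {set 'I_n}) y := #|[set x' in I | ~~ f (x',y)]|.

Lemma comparable f I J x x' : ~~ goodb f I J -> x \in I -> x' \in I ->
  (Row f J x \subset Row f J x') || (Row f J x' \subset Row f J x).
Proof.
move=> nb xI x'I.
case: (boolP (Row f J x \subset Row f J x')) => //= /subsetPn [y1].
rewrite !inE => /andP [y1J fy1] /nandP ny1.
apply/negPn/negP => /subsetPn [y2]; rewrite !inE => /andP [y2J fy2] /nandP ny2.
move/negP: nb; apply; apply/existsP; exists x; apply/existsP; exists x'.
apply/existsP; exists y1; apply/existsP; exists y2.
have nf1 : ~~ f (x', y1) by case: ny1 => //; rewrite y1J.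
have nf2 : ~~ f (x, y2) by case: ny2 => //; rewrite y2J.
by rewrite xI x'I y1J y2J /pat fy1 fy2 nf1 nf2.
Qed.

Lemma key f I J x y : ~~ goodb f I J -> x \in I -> y \in J ->
  f (x,y) = (beta f I y <= alpha f I J x).
Proof.
move=> nb xI yJ.
case: (boolP (f (x,y))) => fxy.
  apply/esym; apply: subset_leq_card; apply/subsetP => x'; rewrite !inE.
  case/andP => x'I nf. rewrite x'I /=.
  case/orP: (comparable nb xI x'I) => sub.
    have : y \in Row f J x' by apply: (subsetP sub); rewrite inE yJ fxy.
    by rewrite inE (negbTE nf) andbF.
  rewrite properE sub /=; apply/subsetPn; exists y; first by rewrite inE yJ fxy.
  by rewrite inE (negbTE nf) andbF.
apply/esym; apply/negbTE; rewrite -ltnNge; apply: proper_card.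
apply/properP; split.
  apply/subsetP => x'; rewrite !inE => /andP [x'I pr]; rewrite x'I /=.
  apply/negP => fx'y.
  have : y \in Row f J x by apply: (subsetP (proper_sub pr)); rewrite inE yJ fx'y.
  by rewrite inE (negbTE fxy) andbF.
exists x; first by rewrite inE xI fxy.
by rewrite inE properxx andbF.
Qed.

Lemma card_fam (aT rT : finType) (P : aT -> pred rT) :
  #|[set f : {ffun aT -> rT} | f \in family P]| = \prod_x #|P x|.
Proof.
rewrite cardsE card_family foldrE big_map big_enum //.
Qed.

Lemma card_bigcup_le (T I : finType) (D : {set I}) (E : I -> {set T}) :
  #|\bigcup_(i in D) E i| <= \sum_(i in D) #|E i|.
Proof.
elim/big_rec2: _ => [|i A s _ IH]; first by rewrite cards0.
apply: leq_trans (leq_card_setU _ _) _; by rewrite leq_add2l.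
Qed.

End Comb.
Set Implicit Arguments. Unset Strict Implicit. Unset Printing Implicit Defensive.

Section Count.
Variable n t : nat.
Notation V := ('I_n * 'I_n)%type.
Notation F := {ffun V -> bool}.

Definition FA (I : {set 'I_n}) (x : 'I_n) : pred 'I_t.+1 := fun z => (x \notin I) ==> (z == ord0).
Definition Aset I := [set a : {ffun 'I_n -> 'I_t.+1} | a \in family (FA I)].

Lemma card_Aset I : #|Aset I| = t.+1 ^ #|I|.
Proof.
rewrite card_fam (eq_bigr (fun x => if x \in I then t.+1 else 1)).
  by rewrite -big_mkcond prod_nat_const.
move=> x _; case: (boolP (x \in I)) => xI.
  rewrite -[RHS](card_ord t.+1); apply: eq_card => z.
  by rewrite unfold_in /FA xI.
rewrite -(card1 (ord0 : 'I_t.+1)); apply: eq_card => z.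
by rewrite unfold_in /FA xI /= inE.
Qed.

Definition FE (I J : {set 'I_n}) (a b : {ffun 'I_n -> 'I_t.+1}) (p : V) : pred bool :=
  fun z => (p \in setX I J) ==> (z == (b p.2 <= a p.1)).
Definition Eset I J a b := [set f : F | f \in family (FE I J a b)].

Lemma card_Eset I J a b : #|Eset I J a b| = 2 ^ #|~: setX I J|.
Proof.
rewrite card_fam (eq_bigr (fun p => if p \in ~: setX I J then 2 else 1)).
  by rewrite -big_mkcond prod_nat_const.
move=> p _; rewrite in_setC; case: (boolP (p \in setX I J)) => pI /=.
  rewrite -(card1 (b p.2 <= a p.1)); apply: eq_card => z.
  by rewrite unfold_in /FE pI /= inE.
rewrite -[RHS](card_bool); apply: eq_card => z.
by rewrite unfold_in /FE (negbTE pI).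
Qed.

Lemma sub_card (I : {set 'I_n}) (P : pred 'I_n) : #|[set x in I | P x]| <= #|I|.
Proof. apply: subset_leq_card; apply/subsetP => z; rewrite inE => /andP []. by []. Qed.

Lemma cover (I J : {set 'I_n}) (f : F) : #|I| = t -> ~~ goodb f I J ->
  f \in \bigcup_(q in setX (Aset I) (Aset J)) Eset I J q.1 q.2.
Proof.
move=> cI nb.
pose a := [ffun x => if x \in I then inord (alpha f I J x) else ord0 : 'I_t.+1].
pose b := [ffun y => if y \in J then inord (beta f I y) else ord0 : 'I_t.+1].
apply/bigcupP; exists (a, b).
  rewrite inE /= !inE; apply/andP; split; apply/familyP => x;
    rewrite unfold_in /FA !ffunE; by case: (x \in _).
rewrite inE; apply/familyP => [[x y]]; rewrite unfold_in /FE /=.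
apply/implyP; rewrite in_setX /= => /andP [xI yJ].
rewrite !ffunE xI yJ !inordK; last 2 first.
- by rewrite ltnS -cI sub_card.
- by rewrite ltnS -cI sub_card.
by rewrite -(key nb xI yJ).
Qed.

Lemma exists_good : 10 <= n -> n^3 <= 2^t ->
  exists f : F, forall I J : {set 'I_n}, #|I| = t -> #|J| = t -> goodb f I J.
Proof.
move=> hn h3.
pose Dt := [set I : {set 'I_n} | #|I| == t].
pose BadS := \bigcup_(p in setX Dt Dt)
   \bigcup_(q in setX (Aset p.1) (Aset p.2)) Eset p.1 p.2 q.1 q.2.
have cD : #|Dt| = 'C(n, t) by rewrite card_draws card_ord.
have lt : #|BadS| < #|F|.
  rewrite card_ffun card_bool card_prod card_ord.
  apply: (leq_ltn_trans _ (@final_ineq n t hn h3)).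
  apply: leq_trans (card_bigcup_le _ _) _.
  apply: leq_trans (_ : \sum_(p in setX Dt Dt) (((t.+1)^t)^2 * 2^(n*n - t*t)) <= _).
    apply: leq_sum => [[I1 J1]]; rewrite in_setX !inE /= => /andP [/eqP c1 /eqP c2].
    apply: leq_trans (card_bigcup_le _ _) _.
    rewrite (eq_bigr (fun _ => 2^(n*n - t*t))); last first.
      move=> q _; rewrite card_Eset.
      have := cardsC (setX I1 J1); rewrite cardsX c1 c2 card_prod card_ord.
      by move=> <-; rewrite addKn.
    by rewrite sum_nat_const cardsX !card_Aset c1 c2 mulnn.
  by rewrite sum_nat_const cardsX cD mulnn mulnA.
have : 0 < #|~: BadS|.
  have := cardsC BadS; move: lt; move: #|BadS| #|~: BadS| => x y.
  move=> h e; have h2 : x < x + y by rewrite e. by move: h2; rewrite -{1}[x]addn0 ltn_add2l.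
case/card_gt0P => f; rewrite in_setC => fB.
exists f => I J cI cJ.
case: (boolP (goodb f I J)) => // nb; exfalso; move/negP: fB; apply.
apply/bigcupP; exists (I, J); first by rewrite in_setX !inE cI cJ eqxx.
exact: cover.
Qed.
End Count.

Theorem mainTheorem5 (n t : nat) :
  (10 <= n)%N -> (0 < t)%N -> t_bound n t ->
  exists o : orientation n,
    forall (I J : {set 'I_n}), #|I| = t -> #|J| = t ->
      has_dicycle o ((inl @: I) :|: (inr @: J)).
Proof.
move=> hn ht tb.
have h3 : (n ^ 3 <= 2 ^ t)%N by apply: log_bound; [lia | exact: tb].
have [f Hf] := exists_good hn h3.
exists [ffun x => [ffun y => f (x,y)]] => I J cI cJ.
have := Hf I J cI cJ.
case/existsP=> x /existsP [x' /existsP [y /existsP [y' /and5P [xI x'I yJ y'J]]]].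
rewrite /pat => /and4P [a b c d].
have xx : x != x' by apply/eqP => E; subst x'; rewrite a in b.
have yy : y != y' by apply/eqP => E; subst y'; rewrite c in b.
exists [:: inl x; inr y; inl x'; inr y']; split.
- by [].
- rewrite /= !inE /=; apply/and3P; split => //.
    by apply/norP; split; [apply/eqP => -[E]; rewrite E eqxx in xx | ].
- apply/allP => v; rewrite !inE => /or4P [] /eqP ->; rewrite ?in_setU.
  + by rewrite (imset_f _ xI).
  + by rewrite (imset_f _ yJ) orbT.
  + by rewrite (imset_f _ x'I).
  + by rewrite (imset_f _ y'J) orbT.
- by rewrite /= !ffunE a b c d.
Qed.
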